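(* Let $C$ be a free $E$-linear code of length $2n$ and rank $k$ whose symplectic hull-rank is $l$. Let $G$ be a $k\times 2n$ binary generator matrix of $C_{Res}$ with rows $r_i=(c_{i,1},\dots,c_{i,n}\,|\,d_{i,1},\dots,d_{i,n})$, $1\le i\le k$, and let $x=(a|b)=(a_1,\dots,a_n\,|\,b_1,\dots,b_n)\in\mathbb{F}_2^{2n}$ satisfy $\langle x,r_i\rangle_s=0$ for all $1\le i\le k$. (a) The $(k+1)\times(2n+2)$ matrix $G'$ over $E$ whose first row is $(\kappa,\kappa a_1,\dots,\kappa a_n,\kappa,\kappa b_1,\dots,\kappa b_n)$ and whose $(i+1)$-th row, $1\le i\le k$, is $(0,\kappa c_{i,1},\dots,\kappa c_{i,n},0,\kappa d_{i,1},\dots,\kappa d_{i,n})$ generates a free $E$-linear code $D$ of length $2n+2$ and rank $k+1$ with symplectic hull-rank $l+1$. (b) Let $m=2n-k$ and let $H$ be an $m\times 2n$ binary parity-check matrix of $C_{Res}$ (i.e. a generator matrix of $(C_{Res})^{\perp_S}$) with rows $s_j=(s_{j,1},\dots,s_{j,n}\,|\,t_{j,1},\dots,t_{j,n})$. Let $y=(u|v)=(u_1,\dots,u_n\,|\,v_1,\dots,v_n)\in (C_{Res})^{\perp_S}$, $\delta=\langle x,y\rangle_s\in\mathbb{F}_2$, and $z_j=\langle x,s_j\rangle_s\in\mathbb{F}_2$ for $1\le j\le m$. Then the $(m+1)\times(2n+2)$ matrix $H'$ over $E$ whose first row is $(\kappa,\kappa u_1,\dots,\kappa u_n,\kappa(1+\delta),\kappa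 v_1,\dots,\kappa v_n)$ and whose $(j+1)$-th row, $1\le j\le m$, is $(0,\kappa s_{j,1},\dots,\kappa s_{j,n},\kappa z_j,\kappa t_{j,1},\dots,\kappa t_{j,n})$ is a parity-check matrix of $D$, i.e. a generator matrix of $D^{\perp_S}$.
   Context: $E=\langle \kappa,\tau \mid 2\kappa=2\tau=0,\ \kappa^2=\kappa,\ \tau^2=\tau,\ \kappa\tau=\kappa,\ \tau\kappa=\tau\rangle$ is the non-unital ring $\{0,\kappa,\tau,\zeta\}$, $\zeta=\kappa+\tau$, with $e\kappa=e\tau=e$, $e\zeta=0$ for all $e\in E$. Every $e\in E$ is uniquely $u\kappa+v\zeta$ ($u,v\in\mathbb{F}_2$); $\pi(u\kappa+v\zeta)=u$, componentwise. For $c\in\mathbb{F}_2$, $\kappa c$ means $\kappa$ if $c=1$ and $0$ if $c=0$. An $E$-linear code of length $N$ is a left $E$-submodule $C\subseteq E^{N}$; $C_{Res}=\pi(C)$, $C_{Tor}=\{v\in\mathbb{F}_2^{N}:\zeta v\in C\}$ (componentwise); $C$ is free if $C_{Res}=C_{Tor}$. For $X=\{x_1,\dots,x_k\}\subseteq E^{N}$, $\langle X\rangle_E=\{\sum e_jx_j:e_j\in E\}$, $\langle X\rangle_{\mathbb{F}_2}=\{\sum u_jx_j:u_j\in\mathbb{F}_2\}$; $X$ generates $C$ if $C=\langle X\rangle_E\cup\langle X\rangle_{\mathbb{F}_2}$; a matrix whose rows form a generating set is a generator matrix. The rank of a free code is the cardinality of a minimal generating set. Symplectic inner product on $E^{2n}$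 or $\mathbb{F}_2^{2n}$: for $x=(u|v),y=(u'|v')$ with halves of length $n$, $\langle x,y\rangle_s=\sum_i u_iv'_i+\sum_iv_iu'_i$. For binary $B$, $B^{\perp_S}=\{z:\langle z,w\rangle_s=0\ \forall w\in B\}$. For $E$-linear $C$: $C^{\perp_S}=\{z\in E^{2n}:\langle z,w\rangle_s=\langle w,z\rangle_s=0\ \forall w\in C\}$ and $SHull(C)=C\cap C^{\perp_S}$; for free $C$, $SHull(C)$ is free and the symplectic hull-rank of $C$ is $\mathrm{rank}(SHull(C))$. A parity-check matrix of $C$ is a generator matrix of $C^{\perp_S}$. *)

(* Defs.v *)
From HB Require Import structures.
From mathcomp Require Import all_boot all_order all_algebra.
Set Implicit Arguments. Unset Strict Implicit. Unset Printing Implicit Defensive.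
Import GRing.Theory.
Local Open Scope ring_scope.

(* The ring E = {0, kappa, tau, zeta}: an element u*kappa + v*zeta (u,v in F_2)
   is represented by the pair (u, v).  Thus kappa = (1,0), zeta = (0,1),
   tau = kappa + zeta = (1,1). *)
Notation E := ('F_2 * 'F_2)%type.

Definition zeroE : E := (0, 0).
Definition kappa : E := (1, 0).
Definition zeta  : E := (0, 1).
Definition tau   : E := (1, 1).

Definition addE (e f : E) : E := (e.1 + f.1, e.2 + f.2).
Definition mulE (e f : E) : E := if f.1 == 0 then zeroE else e.
Definition piE (e : E) : 'F_2 := e.1.
Definition kc (c : 'F_2) : E := if c == 0 then zeroE else kappa.
Definition zc (c : 'F_2) : E := if c == 0 then zeroE else zeta.

Definition vecE (N : nat) := {ffun 'I_N -> E}.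
Definition vzeroE N : vecE N := [ffun _ => zeroE].
Definition vaddE N (x y : vecE N) : vecE N := [ffun i => addE (x i) (y i)].
Definition vscaleE N (e : E) (x : vecE N) : vecE N := [ffun i => mulE e (x i)].

Definition E_linear N (C : {set vecE N}) : Prop :=
  [/\ vzeroE N \in C,
      (forall x y, x \in C -> y \in C -> vaddE x y \in C) &
      (forall e x, x \in C -> vscaleE e x \in C)].

Definition Res N (C : {set vecE N}) : {set 'rV['F_2]_N} :=
  [set \row_i piE (x i) | x : vecE N in C].
Definition Tor N (C : {set vecE N}) : {set 'rV['F_2]_N} :=
  [set v : 'rV['F_2]_N | [ffun i => zc (v 0 i)] \in C].
Definition free_code N (C : {set vecE N}) : Prop := Res C = Tor C.

Definition Espan N k (X : 'I_k -> vecE N) : {set vecE N} :=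
  [set x | [exists e : {ffun 'I_k -> E},
      x == \big[@vaddE N/vzeroE N]_(j < k) vscaleE (e j) (X j)]].
Definition Fspan N k (X : 'I_k -> vecE N) : {set vecE N} :=
  [set x | [exists u : {ffun 'I_k -> 'F_2},
      x == \big[@vaddE N/vzeroE N]_(j < k) (if u j == 0 then vzeroE N else X j)]].
(* X generates C ; a matrix whose rows form X is a generator matrix of C *)
Definition generates N k (X : 'I_k -> vecE N) (C : {set vecE N}) : Prop :=
  C = Espan X :|: Fspan X.
(* rank = cardinality of a minimal (= minimum-size) generating set *)
Definition has_rank N (C : {set vecE N}) (r : nat) : Prop :=
  (exists X : 'I_r -> vecE N, generates X C) /\
  (forall r' (X : 'I_r' -> vecE N), generates X C -> (r <= r')%N).

Definition symplB n (x y : 'rV['F_2]_(n + n)) : 'F_2 :=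
  \sum_(i < n) (x 0 (lshift n i) * y 0 (rshift n i)
              + x 0 (rshift n i) * y 0 (lshift n i)).
Definition perpB n (B : {set 'rV['F_2]_(n + n)}) : {set 'rV['F_2]_(n + n)} :=
  [set z | [forall w in B, symplB z w == 0]].
Definition symplE n (x y : vecE (n + n)) : E :=
  \big[addE/zeroE]_(i < n) addE (mulE (x (lshift n i)) (y (rshift n i)))
                                (mulE (x (rshift n i)) (y (lshift n i))).
Definition perpE n (C : {set vecE (n + n)}) : {set vecE (n + n)} :=
  [set z | [forall w in C, (symplE z w == zeroE) && (symplE w z == zeroE)]].
Definition SHull n (C : {set vecE (n + n)}) : {set vecE (n + n)} :=
  C :&: perpE C.

(* the vector (h1, a_1..a_n | h2, b_1..b_n) of length (n+1)+(n+1) *)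
Definition extE n (h1 : E) (a : 'I_n -> E) (h2 : E) (b : 'I_n -> E)
  : vecE (n.+1 + n.+1) :=
  [ffun p => match split p with
             | inl j => match unlift ord0 j with None => h1 | Some i => a i end
             | inr j => match unlift ord0 j with None => h2 | Some i => b i end
             end].

Definition Gext n k (G : 'M['F_2]_(k, n + n)) (x : 'rV['F_2]_(n + n))
  : 'I_k.+1 -> vecE (n.+1 + n.+1) :=
  fun r => match unlift ord0 r with
  | None => extE kappa (fun i => kc (x 0 (lshift n i)))
                 kappa (fun i => kc (x 0 (rshift n i)))
  | Some i => extE zeroE (fun j => kc (G i (lshift n j)))
                   zeroE (fun j => kc (G i (rshift n j)))
  end.

Definition Hext n m (H : 'M['F_2]_(m, n + n)) (x y : 'rV['F_2]_(n + n))
  : 'I_m.+1 -> vecE (n.+1 + n.+1) :=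
  fun r => match unlift ord0 r with
  | None => extE kappa (fun i => kc (y 0 (lshift n i)))
                 (kc (1 + symplB x y)) (fun i => kc (y 0 (rshift n i)))
  | Some j => extE zeroE (fun i => kc (H j (lshift n i)))
                   (kc (symplB x (row j H))) (fun i => kc (H j (rshift n i)))
  end.

(* Main.v *)
Require Import Defs.
From mathcomp Require Import all_boot all_order all_algebra.
From mathcomp Require Import zify ring perm fingroup.
Set Implicit Arguments. Unset Strict Implicit. Unset Printing Implicit Defensive.
Import GRing.Theory.
Local Open Scope ring_scope.

Lemma F2P (c : 'F_2) : c = 0 \/ c = 1.
Proof. by case: c => [[|[|//]] Hc]; [left|right]; apply/val_inj. Qed.

Lemma F2dbl (c : 'F_2) : c + c = 0.
Proof. by case: (F2P c) => ->; apply/eqP. Qed.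

Lemma mulE_pair (e f : E) : mulE e f = (e.1 * f.1, e.2 * f.1).
Proof.
rewrite /mulE; case: (F2P f.1) => ->; rewrite ?eqxx ?mulr0 ?mulr1 //.
by case: e.
Qed.

Lemma kc1 c : (kc c).1 = c. Proof. by rewrite /kc; case: (F2P c) => ->. Qed.
Lemma kc2 c : (kc c).2 = 0. Proof. by rewrite /kc; case: (F2P c) => ->. Qed.
Lemma zcE c : zc c = (0, c). Proof. by rewrite /zc; case: (F2P c) => ->. Qed.

Section Vec.
Variable N : nat.
Definition piv (z : vecE N) : 'rV['F_2]_N := \row_i (z i).1.
Definition zv (z : vecE N) : 'rV['F_2]_N := \row_i (z i).2.

Lemma piv_add x y : piv (vaddE x y) = piv x + piv y.
Proof. by apply/rowP => i; rewrite !mxE ffunE. Qed.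
Lemma zv_add x y : zv (vaddE x y) = zv x + zv y.
Proof. by apply/rowP => i; rewrite !mxE ffunE. Qed.
Lemma piv0 : piv (vzeroE N) = 0.
Proof. by apply/rowP => i; rewrite !mxE ffunE. Qed.
Lemma zv0 : zv (vzeroE N) = 0.
Proof. by apply/rowP => i; rewrite !mxE ffunE. Qed.
Lemma piv_scale e x : piv (vscaleE e x) = e.1 *: piv x.
Proof. by apply/rowP => i; rewrite !mxE ffunE mulE_pair mulrC. Qed.
Lemma zv_scale e x : zv (vscaleE e x) = e.2 *: piv x.
Proof. by apply/rowP => i; rewrite !mxE ffunE mulE_pair mulrC. Qed.

Lemma vecE_eq z z' : piv z = piv z' -> zv z = zv z' -> z = z'.
Proof.
move=> h1 h2; apply/ffunP => i.
have := congr1 (fun w : 'rV['F_2]_N => w 0 i) h1; have := congr1 (fun w : 'rV['F_2]_N => w 0 i) h2.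
rewrite !mxE; case: (z i) => a b; case: (z' i) => a' b' /= -> -> //.
Qed.

Lemma piv_big r (F : 'I_r -> vecE N) :
  piv (\big[@vaddE N/vzeroE N]_(j < r) F j) = \sum_(j < r) piv (F j).
Proof. exact: (big_morph piv piv_add piv0). Qed.
Lemma zv_big r (F : 'I_r -> vecE N) :
  zv (\big[@vaddE N/vzeroE N]_(j < r) F j) = \sum_(j < r) zv (F j).
Proof. exact: (big_morph zv zv_add zv0). Qed.

Definition KZ r (M : 'M['F_2]_(r, N)) : {set vecE N} :=
  [set z | (piv z <= M)%MS && (zv z <= M)%MS].

Definition piM r (X : 'I_r -> vecE N) : 'M['F_2]_(r, N) :=
  \matrix_(j, i) (X j i).1.

Lemma row_piM r (X : 'I_r -> vecE N) j : row j (piM X) = piv (X j).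
Proof. by apply/rowP => i; rewrite !mxE. Qed.

Lemma piv_ifF (b : bool) (X : vecE N) : piv (if b then vzeroE N else X) = (~~ b)%:R *: piv X.
Proof. by case: b; rewrite ?piv0 ?scale0r ?scale1r. Qed.
Lemma zv_ifF (b : bool) (X : vecE N) : zv (if b then vzeroE N else X) = (~~ b)%:R *: zv X.
Proof. by case: b; rewrite ?zv0 ?scale0r ?scale1r. Qed.

Lemma span_sub r (X : 'I_r -> vecE N) z :
  z \in Espan X :|: Fspan X -> (piv z <= piM X)%MS.
Proof.
rewrite inE !inE => /orP [/existsP [e /eqP ->]| /existsP [u /eqP ->]].
  rewrite piv_big; apply: summx_sub => j _.
  by rewrite piv_scale -row_piM scalemx_sub // row_sub.
rewrite piv_big; apply: summx_sub => j _.
by rewrite piv_ifF -row_piM scalemx_sub // row_sub.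
Qed.

Lemma span_KZ r (X : 'I_r -> vecE N) :
  (forall j i, (X j i).2 = 0) -> Espan X :|: Fspan X = KZ (piM X).
Proof.
move=> hX; apply/setP => z; apply/idP/idP.
  move=> hz; rewrite inE (span_sub hz) /=.
  move: hz; rewrite inE !inE => /orP [/existsP [e /eqP ->]| /existsP [u /eqP ->]].
    rewrite zv_big; apply: summx_sub => j _.
    by rewrite zv_scale -row_piM scalemx_sub // row_sub.
  have -> : zv (\big[@vaddE N/vzeroE N]_(j < r) (if u j == 0 then vzeroE N else X j)) = 0.
    rewrite zv_big big1 // => j _; rewrite zv_ifF.
    have -> : zv (X j) = 0 by apply/rowP => i; rewrite !mxE hX.
    by rewrite scaler0.
  exact: sub0mx.
rewrite inE => /andP [/submxP [a ha] /submxP [b hb]].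
rewrite inE; apply/orP; left; rewrite inE; apply/existsP.
exists [ffun j => (a 0 j, b 0 j)]; apply/eqP; apply: vecE_eq.
  rewrite piv_big ha mulmx_sum_row; apply: eq_bigr => j _.
  by rewrite piv_scale ffunE row_piM.
rewrite zv_big hb mulmx_sum_row; apply: eq_bigr => j _.
by rewrite zv_scale ffunE row_piM.
Qed.

End Vec.
Section KZ.
Variable N : nat.

Lemma KZ_eq r1 r2 (A : 'M['F_2]_(r1, N)) (B : 'M['F_2]_(r2, N)) :
  (A <= B)%MS -> (B <= A)%MS -> KZ A = KZ B.
Proof.
move=> hAB hBA; apply/setP => z; rewrite !inE.
apply/andP/andP => [[h1 h2]|[h1 h2]]; split; by apply: submx_trans; eauto.
Qed.

Definition kv (w : 'rV['F_2]_N) : vecE N := [ffun i => (w 0 i, 0)].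
Lemma piv_kv w : piv (kv w) = w. Proof. by apply/rowP => i; rewrite !mxE ffunE. Qed.
Lemma zv_kv w : zv (kv w) = 0. Proof. by apply/rowP => i; rewrite !mxE ffunE. Qed.
Definition zvec (w : 'rV['F_2]_N) : vecE N := [ffun i => (0, w 0 i)].
Lemma piv_zvec w : piv (zvec w) = 0. Proof. by apply/rowP => i; rewrite !mxE ffunE. Qed.
Lemma zv_zvec w : zv (zvec w) = w. Proof. by apply/rowP => i; rewrite !mxE ffunE. Qed.

Lemma kv_KZ r (M : 'M['F_2]_(r, N)) w : (w <= M)%MS -> kv w \in KZ M.
Proof. by move=> h; rewrite inE piv_kv zv_kv h sub0mx. Qed.

Lemma has_rank_KZ r (M : 'M['F_2]_(r, N)) : has_rank (KZ M) (\rank M).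
Proof.
split.
  exists (fun j => kv (row j (row_base M))).
  rewrite /generates span_KZ; last by move=> j i; rewrite ffunE.
  have -> : piM (fun j => kv (row j (row_base M))) = row_base M.
    by apply/matrixP => i j; rewrite mxE ffunE /= mxE.
  by apply: KZ_eq; rewrite eq_row_base.
move=> r' X hX.
have sub : (M <= piM X)%MS.
  apply/row_subP => i; have := kv_KZ (row_sub i M); rewrite hX => /span_sub.
  by rewrite piv_kv.
exact: leq_trans (mxrankS sub) (rank_leq_row _).
Qed.

Lemma has_rank_uniq (C : {set vecE N}) a b : has_rank C a -> has_rank C b -> a = b.
Proof.
move=> [[Xa ha] ma] [[Xb hb] mb]; apply/eqP; rewrite eqn_leq.
by rewrite (ma _ Xb hb) (mb _ Xa ha).
Qed.

Lemma E_linear_KZ r (M : 'M['F_2]_(r, N)) : E_linear (KZ M).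
Proof.
split.
- by rewrite inE piv0 zv0 sub0mx.
- move=> a b; rewrite !inE piv_add zv_add => /andP [h1 h2] /andP [h3 h4].
  by rewrite !addmx_sub.
- move=> e a; rewrite !inE piv_scale zv_scale => /andP [h1 h2].
  by rewrite !scalemx_sub.
Qed.

Lemma Res_KZ r (M : 'M['F_2]_(r, N)) : Res (KZ M) = [set w | (w <= M)%MS].
Proof.
apply/setP => w; rewrite inE; apply/imsetP/idP.
  by move=> [z]; rewrite inE => /andP [h _] ->.
by move=> h; exists (kv w); [apply: kv_KZ | apply/rowP => i; rewrite !mxE ffunE].
Qed.

Lemma Tor_KZ r (M : 'M['F_2]_(r, N)) : Tor (KZ M) = [set w | (w <= M)%MS].
Proof.
apply/setP => w; rewrite !inE.
have -> : [ffun i => zc (w 0 i)] = zvec w by apply/ffunP => i; rewrite !ffunE zcE.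
by rewrite piv_zvec zv_zvec sub0mx.
Qed.

Lemma free_KZ r (M : 'M['F_2]_(r, N)) : free_code (KZ M).
Proof. by rewrite /free_code Res_KZ Tor_KZ. Qed.

Lemma C_KZ r (C : {set vecE N}) (G : 'M['F_2]_(r, N)) :
  E_linear C -> free_code C -> (forall w, w \in Res C <-> (w <= G)%MS) -> C = KZ G.
Proof.
move=> [_ hadd hsc] hfree hR.
have hT : forall w, (w <= G)%MS -> zvec w \in C.
  move=> w /hR; rewrite hfree inE.
  by have -> : [ffun i => zc (w 0 i)] = zvec w by apply/ffunP => i; rewrite !ffunE zcE.
apply/setP => z; rewrite inE; apply/idP/idP.
  move=> hz; apply/andP; split.
    by apply/hR; apply/imsetP; exists z.
  have hzz : zvec (zv z) \in C.
    have -> : zvec (zv z) = vaddE z (vscaleE kappa z).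
      apply: vecE_eq; [rewrite piv_add piv_scale piv_zvec /= | rewrite zv_add zv_scale zv_zvec /=].
        by rewrite scale1r; apply/rowP => i; rewrite !mxE; apply/esym/F2dbl.
      by rewrite scale0r addr0.
    by apply: hadd => //; apply: hsc.
  apply/hR; rewrite hfree inE.
  by have -> : [ffun i => zc (zv z 0 i)] = zvec (zv z) by apply/ffunP => i; rewrite !ffunE zcE.
move=> /andP [/hR /imsetP [x0 hx0 ex] /hT hz].
have -> : z = vaddE (vscaleE kappa x0) (zvec (zv z)).
  apply: vecE_eq; [rewrite piv_add piv_scale piv_zvec /= | rewrite zv_add zv_scale zv_zvec /=].
    by rewrite scale1r addr0 ex.
  by rewrite scale0r add0r.
by apply: hadd => //; apply: hsc.
Qed.

End KZ.
Lemma split_l m n' (i : 'I_m) : split (lshift n' i) = inl i.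
Proof. exact: (unsplitK (inl i : 'I_m + 'I_n')). Qed.
Lemma split_r m n' (i : 'I_n') : split (rshift m i) = inr i.
Proof. exact: (unsplitK (inr i : 'I_m + 'I_n')). Qed.

Section Sympl.
Variable n : nat.
Local Notation N := (n + n).
Implicit Types (u v : 'rV['F_2]_(n + n)).

Definition swidx (p : 'I_N) : 'I_N :=
  match split p with inl i => rshift n i | inr i => lshift n i end.

Lemma swidxK : involutive swidx.
Proof.
move=> p; rewrite /swidx; case: (split_ordP p) => i ->.
  by rewrite split_r.
by rewrite split_l.
Qed.

Lemma swidx_inj : injective swidx.
Proof. exact: inv_inj swidxK. Qed.

Lemma symplB_alt (u v : 'rV['F_2]_N) :
  symplB u v = \sum_(p < N) u 0 p * v 0 (swidx p).
Proof.
rewrite /symplB big_split /= big_split_ord /=; congr (_ + _); apply: eq_bigr => i _;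
  rewrite /swidx.
  by rewrite split_l.
by rewrite split_r.
Qed.

Lemma symplBC u v : symplB u v = symplB v u.
Proof. by rewrite /symplB; apply: eq_bigr => i _; ring. Qed.

Lemma symplBDl (u1 u2 : 'rV['F_2]_(n + n)) v : symplB (u1 + u2) v = symplB u1 v + symplB u2 v.
Proof. by rewrite /symplB -big_split; apply: eq_bigr => i _; rewrite !mxE /=; ring. Qed.

Lemma symplBZl (c : 'F_2) u v : symplB (c *: u) v = c * symplB u v.
Proof. by rewrite /symplB mulr_sumr; apply: eq_bigr => i _; rewrite !mxE; ring. Qed.

Lemma symplBDr u (v1 v2 : 'rV['F_2]_(n + n)) : symplB u (v1 + v2) = symplB u v1 + symplB u v2.
Proof. by rewrite symplBC symplBDl !(symplBC u). Qed.

Lemma symplBZr (c : 'F_2) u v : symplB u (c *: v) = c * symplB u v.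
Proof. by rewrite symplBC symplBZl symplBC. Qed.

Lemma symplBuu u : symplB u u = 0.
Proof. by rewrite /symplB big1 // => i _; rewrite mulrC F2dbl. Qed.

Definition Am r (M : 'M['F_2]_(r, N)) : 'M['F_2]_(N, r) := \matrix_(p, i) M i (swidx p).
Definition perpmx r (M : 'M['F_2]_(r, N)) : 'M['F_2]_N := kermx (Am M).

Lemma Am_entry r (M : 'M['F_2]_(r, N)) u i : (u *m Am M) 0 i = symplB u (row i M).
Proof. by rewrite symplB_alt !mxE; apply: eq_bigr => p _; rewrite !mxE. Qed.

Lemma Am_mul r r' (D : 'M['F_2]_(r', r)) (M : 'M['F_2]_(r, N)) : Am (D *m M) = Am M *m D^T.
Proof.
apply/matrixP => p i; rewrite !mxE; apply: eq_bigr => j _; rewrite !mxE mulrC //.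
Qed.

Lemma perpP r (M : 'M['F_2]_(r, N)) u :
  (u <= perpmx M)%MS <-> (forall v, (v <= M)%MS -> symplB u v = 0).
Proof.
split.
  move=> /sub_kermxP hu v /submxP [D ->].
  have e := Am_entry (D *m M) u 0.
  have -> : D *m M = row 0 (D *m M) by apply/rowP => j; rewrite !mxE.
  by rewrite -e Am_mul mulmxA hu mul0mx mxE.
move=> h; apply/sub_kermxP; apply/rowP => i; rewrite Am_entry mxE.
by apply: h; apply: row_sub.
Qed.

Lemma perpP_rows r (M : 'M['F_2]_(r, N)) u :
  (forall i, symplB u (row i M) = 0) -> (u <= perpmx M)%MS.
Proof.
move=> h; apply/sub_kermxP; apply/rowP => i; rewrite Am_entry mxE; exact: h.
Qed.

Lemma rank_perpmx r (M : 'M['F_2]_(r, N)) : \rank (perpmx M) = (N - \rank M)%N.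
Proof.
rewrite /perpmx mxrank_ker; congr (_ - _)%N.
have -> : Am M = (col_perm (perm swidx_inj) M)^T.
  by apply/matrixP => p i; rewrite !mxE permE.
rewrite mxrank_tr col_permE mxrankMfree // row_free_unit; exact: unitmx_perm.
Qed.

Lemma perpmx_eq r1 r2 (A : 'M['F_2]_(r1, N)) (B : 'M['F_2]_(r2, N)) :
  (A <= B)%MS -> (B <= A)%MS -> (perpmx A <= perpmx B)%MS.
Proof.
move=> _ hBA; apply/row_subP => i; apply/perpP => v hv.
have /perpP := row_sub i (perpmx A); apply; exact: submx_trans hv hBA.
Qed.

Lemma symplE1 (z w : vecE N) : (symplE z w).1 = symplB (piv z) (piv w).
Proof.
rewrite /symplE (big_morph (fun e : E => e.1) (id1 := 0) (op1 := +%R) (id2 := zeroE) (op2 := addE) (fun a b => erefl) erefl) //.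
by apply: eq_bigr => i _; rewrite /= !mulE_pair !mxE.
Qed.
Lemma symplE2 (z w : vecE N) : (symplE z w).2 = symplB (zv z) (piv w).
Proof.
rewrite /symplE (big_morph (fun e : E => e.2) (id1 := 0) (op1 := +%R) (id2 := zeroE) (op2 := addE) (fun a b => erefl) erefl) //.
by apply: eq_bigr => i _; rewrite /= !mulE_pair !mxE.
Qed.

Lemma E0P (e : E) : (e == zeroE) = (e.1 == 0) && (e.2 == 0).
Proof. by case: e. Qed.

Lemma perpE_KZ r (M : 'M['F_2]_(r, N)) : perpE (KZ M) = KZ (perpmx M).
Proof.
apply/setP => z; rewrite !inE; apply/forallP/idP.
  move=> h; apply/andP; split; apply/perpP_rows => i;
    have := h (kv (row i M)); rewrite kv_KZ ?row_sub //= => /andP [];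
    rewrite E0P symplE1 symplE2 piv_kv => /andP [/eqP h1 /eqP h2] _ //.
move=> /andP [hp hz] w; apply/implyP; rewrite inE => /andP [hpw hzw].
rewrite !E0P !symplE1 !symplE2.
move/perpP: hp => hp; move/perpP: hz => hz.
by rewrite hp // hz // symplBC hp // symplBC hp // eqxx.
Qed.

End Sympl.
Section Ext.
Variable n : nat.
Local Notation N' := (n.+1 + n.+1)%N.
Local Notation c0 := (lshift n.+1 (@ord0 n)).
Local Notation c1 := (rshift n.+1 (@ord0 n)).

Definition eidx (q : 'I_(n + n)) : 'I_N' :=
  match split q with
  | inl i => lshift n.+1 (lift ord0 i)
  | inr i => rshift n.+1 (lift ord0 i) end.

Definition ext2 (h1 h2 : 'F_2) (u : 'rV['F_2]_(n + n)) : 'rV['F_2]_N' :=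
  \row_p match split p with
         | inl j => match unlift ord0 j with None => h1 | Some i => u 0 (lshift n i) end
         | inr j => match unlift ord0 j with None => h2 | Some i => u 0 (rshift n i) end
         end.

Lemma val_eidx q : nat_of_ord (eidx q) = if (q < n)%N then (nat_of_ord q).+1 else (nat_of_ord q).+2.
Proof.
rewrite /eidx; case: (split_ordP q) => i -> /=; rewrite /bump leq0n add1n //.
lia.
Qed.

Lemma eidx_inj : injective eidx.
Proof.
move=> q1 q2 h; apply/val_inj; move: (congr1 (@nat_of_ord _) h); rewrite !val_eidx /=.
by case: (ltnP q1 n); case: (ltnP q2 n); lia.
Qed.

Lemma eidx_neq_c0 q : (eidx q == c0) = false.
Proof. by apply/negbTE/eqP => /(congr1 (@nat_of_ord _)); rewrite val_eidx /=; case: ifP. Qed.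

Lemma eidx_neq_c1 q : (eidx q == c1) = false.
Proof.
apply/negbTE/eqP => /(congr1 (@nat_of_ord _)); rewrite val_eidx /=.
have := ltn_ord q; case: (ltnP q n); lia.
Qed.

Lemma pos_cases (p : 'I_N') : p = c0 \/ p = c1 \/ exists q, p = eidx q.
Proof.
case: (split_ordP p) => j ->; case: (unliftP ord0 j) => [i ->|->].
- by right; right; exists (lshift n i); rewrite /eidx split_l.
- by left.
- by right; right; exists (rshift n i); rewrite /eidx split_r.
- by right; left.
Qed.

Lemma ext2_c0 h1 h2 u : ext2 h1 h2 u 0 c0 = h1.
Proof. by rewrite mxE split_l unlift_none. Qed.
Lemma ext2_c1 h1 h2 u : ext2 h1 h2 u 0 c1 = h2.
Proof. by rewrite mxE split_r unlift_none. Qed.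
Lemma ext2_Ll h1 h2 u i : ext2 h1 h2 u 0 (lshift n.+1 (lift ord0 i)) = u 0 (lshift n i).
Proof. by rewrite mxE split_l liftK. Qed.
Lemma ext2_Rl h1 h2 u i : ext2 h1 h2 u 0 (rshift n.+1 (lift ord0 i)) = u 0 (rshift n i).
Proof. by rewrite mxE split_r liftK. Qed.
Lemma ext2_e h1 h2 u q : ext2 h1 h2 u 0 (eidx q) = u 0 q.
Proof.
rewrite /eidx; case: (split_ordP q) => i ->; by rewrite ?ext2_Ll ?ext2_Rl.
Qed.

Lemma rowE3 (w1 w2 : 'rV['F_2]_N') :
  w1 0 c0 = w2 0 c0 -> w1 0 c1 = w2 0 c1 ->
  (forall q, w1 0 (eidx q) = w2 0 (eidx q)) -> w1 = w2.
Proof.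
move=> h0 h1 he; apply/rowP => p; case: (pos_cases p) => [->|[->|[q ->]]] //.
Qed.

Lemma ext2D h1 h2 u h1' h2' u' :
  ext2 h1 h2 u + ext2 h1' h2' u' = ext2 (h1 + h1') (h2 + h2') (u + u').
Proof.
by apply: rowE3 => [||q]; rewrite [LHS]mxE ?ext2_c0 ?ext2_c1 ?ext2_e // mxE.
Qed.

Lemma ext2Z (c : 'F_2) h1 h2 u : c *: ext2 h1 h2 u = ext2 (c * h1) (c * h2) (c *: u).
Proof.
by apply: rowE3 => [||q]; rewrite [LHS]mxE ?ext2_c0 ?ext2_c1 ?ext2_e // mxE.
Qed.

Definition Ex : 'M['F_2]_(n + n, N') := \matrix_(q, p) (eidx q == p)%:R.
Definition Pr : 'M['F_2]_(N', n + n) := \matrix_(p, q) (p == eidx q)%:R.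

Lemma ext2_Ex u : u *m Ex = ext2 0 0 u.
Proof.
apply/rowP => p; case: (pos_cases p) => [->|[->|[q ->]]];
  rewrite ?ext2_c0 ?ext2_c1 ?ext2_e mxE.
- by rewrite big1 // => q _; rewrite mxE eidx_neq_c0 mulr0.
- by rewrite big1 // => q _; rewrite mxE eidx_neq_c1 mulr0.
rewrite (bigD1 q) //= mxE eqxx mulr1 big1 ?addr0 // => q' hq'.
by rewrite mxE (inj_eq eidx_inj) (negbTE hq') mulr0.
Qed.

Lemma mul_Pr (w : 'rV['F_2]_N') : w *m Pr = \row_q w 0 (eidx q).
Proof.
apply/rowP => q; rewrite !mxE (bigD1 (eidx q)) //= mxE eqxx mulr1 big1 ?addr0 // => p hp.
by rewrite mxE (negbTE hp) mulr0.
Qed.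

Lemma ext2_Pr h1 h2 u : ext2 h1 h2 u *m Pr = u.
Proof. by rewrite mul_Pr; apply/rowP => q; rewrite mxE ext2_e. Qed.

Lemma MExPr r (M : 'M['F_2]_(r, n + n)) : M *m Ex *m Pr = M.
Proof. by apply/row_matrixP => i; rewrite !row_mul ext2_Ex ext2_Pr. Qed.

Lemma rank_MEx r (M : 'M['F_2]_(r, n + n)) : \rank (M *m Ex) = \rank M.
Proof.
apply/eqP; rewrite eqn_leq mxrankM_maxl /=.
by rewrite -{1}(MExPr M) mxrankM_maxl.
Qed.

Lemma sympl_ext2 h1 h2 u h1' h2' u' :
  symplB (ext2 h1 h2 u) (ext2 h1' h2' u') = h1 * h2' + h2 * h1' + symplB u u'.
Proof.
rewrite {1}/symplB big_ord_recl ext2_c0 ext2_c1 ext2_c0 ext2_c1; congr (_ + _).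
by apply: eq_bigr => i _; rewrite !ext2_Ll !ext2_Rl.
Qed.

End Ext.
Lemma SHull_KZ n r (M : 'M['F_2]_(r, n + n)) : SHull (KZ M) = KZ (M :&: perpmx M)%MS.
Proof.
rewrite /SHull perpE_KZ; apply/setP => z; rewrite !inE !sub_capmx.
by case: (piv z <= M)%MS; case: (zv z <= M)%MS; case: (piv z <= perpmx M)%MS;
  case: (zv z <= perpmx M)%MS.
Qed.

Lemma rank_add1 N (c : 'I_N) (a : 'rV['F_2]_N) r (B : 'M['F_2]_(r, N)) :
  a 0 c = 1 -> (forall i, row i B 0 c = 0) -> \rank (a + B)%MS = (\rank B).+1.
Proof.
move=> ha hB.
have nsub : ~~ (a <= B)%MS.
  apply/negP => /submxP [D hD]; move: ha; rewrite hD mxE big1; first by move/eqP.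
  by move=> j _; have := hB j; rewrite mxE => ->; rewrite mulr0.
have ra : \rank a = 1%N.
  rewrite rank_rV; case: eqP => // h; by move: ha; rewrite h mxE => /eqP.
have rc : \rank (a :&: B)%MS = 0%N.
  have le := mxrankS (capmxSl a B); rewrite ra in le.
  case: (ltnP (\rank (a :&: B)%MS) 1) => [|h]; first by case: (\rank _).
  have e : (\rank (a :&: B)%MS == \rank a) by rewrite ra eqn_leq le h.
  rewrite (mxrank_leqif_eq (capmxSl a B)).2 in e.
  case/andP: e => _ e; exfalso; move/negP: nsub; apply.
  exact: submx_trans e (capmxSr a B).
have := mxrank_sum_cap a B; rewrite ra rc addn0 => ->; by rewrite add1n.
Qed.

Lemma mul11 N (c1 : 'M['F_2]_1) (a : 'rV['F_2]_N) : c1 *m a = c1 0 0 *: a.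
Proof. by rewrite {1}(mx11_scalar c1) mul_scalar_mx. Qed.

Lemma F2_mul1 (c : 'F_2) : 1 * c = c. Proof. exact: mul1r. Qed.
Theorem mainTheorem3 (n k l m : nat) (C : {set vecE (n + n)})
  (G : 'M['F_2]_(k, n + n)) (H : 'M['F_2]_(m, n + n))
  (x y : 'rV['F_2]_(n + n)) :
  E_linear C -> free_code C -> has_rank C k -> has_rank (SHull C) l ->
  (forall w, w \in Res C <-> (w <= G)%MS) ->
  (forall i : 'I_k, symplB x (row i G) = 0) ->
  m = (n + n - k)%N ->
  (forall w, w \in perpB (Res C) <-> (w <= H)%MS) ->
  y \in perpB (Res C) ->
  let D := Espan (Gext G x) :|: Fspan (Gext G x) in
  (E_linear D /\ free_code D /\ has_rank D k.+1 /\ has_rank (SHull D) l.+1) /\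
  generates (Hext H x y) (perpE D).
Proof.
move=> hlin hfree hrk hrkS hRes hx _ hH hy D.
have CK : C = KZ G := C_KZ hlin hfree hRes.
have rkG : \rank G = k.
  by apply: has_rank_uniq (has_rank_KZ G) _; rewrite -CK.
have rkS : \rank (G :&: perpmx G)%MS = l.
  by apply: has_rank_uniq (has_rank_KZ _) _; rewrite -SHull_KZ -CK.
have hxp : (x <= perpmx G)%MS by apply: perpP_rows.
have hyp : (y <= perpmx G)%MS.
  apply: perpP_rows => i; move: hy; rewrite inE => /forallP /(_ (row i G)) /implyP.
  by move=> h; apply/eqP; apply: h; apply/hRes; apply: row_sub.
have HG : (H <= perpmx G)%MS.
  apply/row_subP => j; have := row_sub j H; move/hH; rewrite inE => /forallP hj.
  apply: perpP_rows => i; apply/eqP; have := hj (row i G); move/implyP; apply.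
  by apply/hRes; apply: row_sub.
have GH : (perpmx G <= H)%MS.
  apply/row_subP => i; apply/hH; rewrite inE; apply/forallP => w; apply/implyP.
  move=> /hRes hw; apply/eqP; have /perpP := row_sub i (perpmx G); exact.
pose W := piM (Gext G x).
pose a := ext2 1 1 x.
have rowW0 : row 0 W = a.
  rewrite row_piM; apply/rowP => p; rewrite /Gext unlift_none !mxE /extE ffunE.
  by case: (split p) => j; case: (unlift ord0 j) => *; rewrite ?kc1.
have rowWl : forall i, row (lift ord0 i) W = row i (G *m Ex n).
  move=> i; rewrite row_piM row_mul ext2_Ex; apply/rowP => p.
  rewrite /Gext liftK !mxE /extE ffunE.
  by case: (split p) => j; case: (unlift ord0 j) => *; rewrite ?kc1 ?mxE.
have Gk : forall r p, (Gext G x r p).2 = 0.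
  move=> r p; rewrite /Gext; case: (unlift ord0 r) => *; rewrite /extE ffunE;
  by case: (split p) => j; case: (unlift ord0 j) => *; rewrite ?kc2.
have DK : D = KZ W by rewrite /D span_KZ.
have GExW : (G *m Ex n <= W)%MS.
  by apply/row_subP => i; rewrite -rowWl row_sub.
have WE1 : (W <= a + G *m Ex n)%MS.
  apply/row_subP => r; case: (unliftP ord0 r) => [i ->|->].
    by rewrite rowWl; apply: submx_trans (addsmxSr _ _); apply: row_sub.
  by rewrite rowW0; apply: addsmxSl.
have WE2 : (a + G *m Ex n <= W)%MS.
  by rewrite addsmx_sub GExW -rowW0 row_sub.
have aE : forall (c : 'F_2) g, c *: a + g *m Ex n = ext2 c c (c *: x + g).
  by move=> c g; rewrite ext2Z ext2_Ex ext2D !mulr1 !addr0.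
have decW : forall v, (v <= W)%MS ->
    exists c g, (g <= G)%MS /\ v = c *: a + g *m Ex n.
  move=> v hv; have /sub_addsmxP [u ->] := submx_trans hv WE1.
  exists (u.1 0 0), (u.2 *m G); split; first exact: submxMl.
  by rewrite mul11 mulmxA.
have c0E : forall r (M : 'M['F_2]_(r, n + n)) i, row i (M *m Ex n) 0 (lshift n.+1 ord0) = 0.
  by move=> r M i; rewrite row_mul ext2_Ex ext2_c0.
have xG : forall g, (g <= G)%MS -> symplB x g = 0.
  by move=> g hg; move/perpP: hxp; apply.
have rkW : \rank W = k.+1.
  rewrite (eqmx_rank (_ : (W == a + G *m Ex n)%MS)); last by rewrite /eqmx WE1 WE2.
  by rewrite (rank_add1 (c := lshift n.+1 ord0)) ?ext2_c0 // rank_MEx rkG.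
pose V := (G :&: perpmx G)%MS.
have capE1 : (W :&: perpmx W <= a + V *m Ex n)%MS.
  apply/row_subP => i; have := row_sub i (W :&: perpmx W)%MS.
  rewrite sub_capmx => /andP [/decW [c [g [hg ->]]] hp].
  apply: addmx_sub_adds; first by apply: scalemx_sub.
  apply: submxMr; rewrite sub_capmx hg /=; apply/perpP => v hv.
  have hvW : (v *m Ex n <= W)%MS by apply: submx_trans GExW; apply: submxMr.
  move/perpP: hp => /(_ _ hvW); rewrite aE ext2_Ex sympl_ext2 !mulr0 !add0r.
  by rewrite symplBDl symplBZl xG // mulr0 add0r.
have capE2 : (a + V *m Ex n <= W :&: perpmx W)%MS.
  rewrite addsmx_sub !sub_capmx; apply/andP; split; apply/andP; split.
  - by rewrite -rowW0 row_sub.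
  - apply/perpP => v /decW [c [g [hg ->]]]; rewrite aE sympl_ext2 !mul1r.
    by rewrite symplBDr symplBZr symplBuu xG // mulr0 !addr0 F2dbl.
  - apply: submx_trans GExW; apply: submxMr; exact: capmxSl.
  - apply/row_subP => i; rewrite row_mul ext2_Ex.
    have := row_sub i V; rewrite sub_capmx => /andP [g0G g0p].
    apply/perpP => v /decW [c [g [hg ->]]]; rewrite aE sympl_ext2 !mul0r !add0r.
    rewrite symplBDr symplBZr symplBC xG // mulr0 add0r.
    by move/perpP: g0p; apply.
have rkWW : \rank (W :&: perpmx W)%MS = l.+1.
  rewrite (eqmx_rank (_ : ((W :&: perpmx W)%MS == a + V *m Ex n)%MS)); last first.
    by rewrite /eqmx capE1 capE2.
  by rewrite (rank_add1 (c := lshift n.+1 ord0)) ?ext2_c0 // rank_MEx rkS.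
pose h0 := ext2 1 (1 + symplB x y) y.
pose Hpp := \matrix_(j, p) ext2 0 (symplB x (row j H)) (row j H) 0 p.
have rowHpp : forall j, row j Hpp = ext2 0 (symplB x (row j H)) (row j H).
  by move=> j; apply/rowP => p; rewrite !mxE.
pose H' := piM (Hext H x y).
have rowH0 : row 0 H' = h0.
  rewrite row_piM; apply/rowP => p; rewrite /Hext unlift_none !mxE /extE ffunE.
  by case: (split p) => j; case: (unlift ord0 j) => *; rewrite ?kc1.
have rowHl : forall j, row (lift ord0 j) H' = row j Hpp.
  move=> j; rewrite row_piM rowHpp; apply/rowP => p.
  rewrite /Hext liftK !mxE /extE ffunE.
  by case: (split p) => j'; case: (unlift ord0 j') => *; rewrite ?kc1 ?mxE.
have Hk : forall r p, (Hext H x y r p).2 = 0.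
  move=> r p; rewrite /Hext; case: (unlift ord0 r) => *; rewrite /extE ffunE;
  by case: (split p) => j; case: (unlift ord0 j) => *; rewrite ?kc2.
have HW : (H' <= perpmx W)%MS.
  apply/row_subP => r; case: (unliftP ord0 r) => [j ->|->].
    rewrite rowHl rowHpp; apply/perpP => v /decW [c [g [hg ->]]].
    rewrite aE sympl_ext2 mul0r add0r symplBDr symplBZr.
    have -> : symplB (row j H) g = 0.
      by have /perpP := submx_trans (row_sub j H) HG; apply.
    rewrite addr0 symplBC mulrC; exact: F2dbl.
  rewrite rowH0; apply/perpP => v /decW [c [g [hg ->]]].
  rewrite aE sympl_ext2 symplBDr symplBZr.
  have -> : symplB y g = 0 by move/perpP: hyp; apply.
  rewrite addr0 (symplBC y x).
  by case: (F2P c) => ->; case: (F2P (symplB x y)) => ->; apply/eqP.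
have rkH : \rank H = (n + n - k)%N.
  by rewrite (eqmx_rank (_ : (H == perpmx G)%MS)) ?rank_perpmx ?rkG // /eqmx HG GH.
have HppPr : Hpp *m Pr n = H.
  by apply/row_matrixP => j; rewrite row_mul rowHpp ext2_Pr.
have kle : (k <= n + n)%N by rewrite -rkG rank_leq_col.
have HeqW : (H' == perpmx W)%MS.
  rewrite -(mxrank_leqif_eq HW).2; rewrite eqn_leq (mxrankS HW) /=.
  rewrite rank_perpmx rkW.
  rewrite (eqmx_rank (_ : (H' == h0 + Hpp)%MS)); last first.
    rewrite /eqmx; apply/andP; split.
      apply/row_subP => r; case: (unliftP ord0 r) => [j ->|->].
        by rewrite rowHl; apply: submx_trans (addsmxSr _ _); apply: row_sub.
      by rewrite rowH0; apply: addsmxSl.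
    rewrite addsmx_sub; apply/andP; split; first by rewrite -rowH0 row_sub.
    by apply/row_subP => j; rewrite -rowHl row_sub.
  rewrite (rank_add1 (c := lshift n.+1 ord0)) ?ext2_c0 //; last first.
    by move=> j; rewrite rowHpp ext2_c0.
  have := mxrankM_maxl Hpp (Pr n); rewrite HppPr rkH.
  lia.
split; first split.
- by rewrite DK; apply: E_linear_KZ.
- split; first by rewrite DK; apply: free_KZ.
  split; first by rewrite DK; have := has_rank_KZ W; rewrite rkW.
  by rewrite DK SHull_KZ; have := has_rank_KZ (W :&: perpmx W)%MS; rewrite rkWW.
rewrite /generates DK perpE_KZ span_KZ //.
by apply: KZ_eq; case/andP: HeqW.
Qed.
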